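(* In $\mathrm{Top}$, let $\iota:\emptyset\to\{\bullet\}$ and let $j:\{\bullet\}\to\{\bullet_1,\bullet_2\}$ be the inclusion of a point into the two-point discrete space. Then $\{\iota\}^{rll}=\{j\}^l$, and this class is the class of continuous maps $p:X\to Y$ such that the image $p(X)$ intersects every non-empty clopen subset of $Y$. In particular, if $\pi_0(Y)$ is finite, $p$ belongs to this class if and only if the induced map $\pi_0(p):\pi_0(X)\to\pi_0(Y)$ is surjective.
   Context: For morphisms $f:A\to B$, $g:C\to D$, $f\pitchfork g$ means: for all $t:A\to C$, $b:B\to D$ with $g\circ t=b\circ f$ there is $d:B\to C$ with $d\circ f=t$, $g\circ d=b$. For a class $P$ of morphisms, $P^l=\{f: f\pitchfork g\ \forall g\in P\}$, $P^r=\{g: f\pitchfork g\ \forall f\in P\}$, and $P^{w}$ for a word $w$ in $l,r$ means applying these operations from left to right (e.g. $P^{rll}=((P^r)^l)^l$). $\pi_0(X)$ denotes the set of connected components of $X$. *)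

(* Defs.v *)
From HB Require Import structures.
From mathcomp Require Import all_boot all_order all_algebra.
From mathcomp Require Import all_classical all_reals all_analysis.
Set Implicit Arguments. Unset Strict Implicit. Unset Printing Implicit Defensive.
Local Open Scope classical_set_scope.

Record Mor := MkMor {
  mdom : topologicalType;
  mcod : topologicalType;
  morfun : mdom -> mcod;
  mcont : continuous morfun }.
Arguments morfun : clear implicits.

Definition MorClass := Mor -> Prop.

Definition lifts (f g : Mor) : Prop :=
  forall (t : mdom f -> mdom g) (b : mcod f -> mcod g),
    continuous t -> continuous b ->
    morfun g \o t = b \o morfun f ->
    exists d : mcod f -> mdom g,
      [/\ continuous d, d \o morfun f = t & morfun g \o d = b].

Definition lorth (P : MorClass) : MorClass := fun f => forall g, P g -> lifts f g.
Definition rorth (P : MorClass) : MorClass := fun g => forall f, P f -> lifts f g.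

Definition singleton_class (m : Mor) : MorClass := fun f => f = m.

Definition Empty : topologicalType := discrete_topology void.
Definition Pt : topologicalType := discrete_topology unit.
Definition Two : topologicalType := discrete_topology bool.

Lemma iota_cont : continuous (fun x : Empty => (match x with end : Pt)).
Proof. by case. Qed.

Lemma j_cont : continuous (fun _ : Pt => (true : Two)).
Proof. by move=> x; apply: cvg_cst. Qed.

Definition iota_empty : Mor := MkMor iota_cont.
Definition j_pt : Mor := MkMor j_cont.

Definition pi0 (X : topologicalType) (x : X) : set X := connected_component setT x.

(* Main.v *)
Require Import Defs.
From HB Require Import structures.
From mathcomp Require Import all_boot all_order all_algebra.
From mathcomp Require Import all_classical all_reals all_analysis.
Local Open Scope classical_set_scope.


Lemma disc_cont (T : choiceType) (Y : topologicalType) (f : discrete_topology T -> Y) :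
  continuous f.
Proof.
move=> x U /= Ufx.
have H1 : nbhs x [set x] := discrete_set1 x.
apply: (filterS _ H1) => y /= ->.
exact: nbhs_singleton.
Qed.

Lemma Pt_cont (Y : topologicalType) (f : Pt -> Y) : continuous f.
Proof. exact: (@disc_cont unit). Qed.
Lemma Two_cont (Y : topologicalType) (f : Two -> Y) : continuous f.
Proof. exact: (@disc_cont bool). Qed.

Lemma lc_cont (Y : topologicalType) (b : Y -> Two) :
  (forall x, \forall y \near x, b y = b x) -> continuous b.
Proof.
move=> H x; apply/(@discrete_cvg (discrete_topology bool)) => //.
exact: H.
Qed.

Lemma cont_lc (Y : topologicalType) (b : Y -> Two) :
  continuous b -> forall x, \forall y \near x, b y = b x.
Proof.
move=> cb x; have := cb x [set b x].
apply; exact: (@discrete_set1 (discrete_topology bool)).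
Qed.

Definition JL (f : Mor) := forall b : mcod f -> Two, continuous b ->
  (forall x, b (morfun f x) = true) -> forall y, b y = true.

Lemma jlift_iff (f : Mor) : lorth (singleton_class j_pt) f <-> JL f.
Proof.
split.
- move=> H b cb hb y.
  have [] := H j_pt erefl (fun _ => (tt : Pt)) b (fun _ => cvg_cst _) cb.
    by apply: boolp.funext => x /=; rewrite hb.
  move=> d [_ _ e]; by rewrite -e.
- move=> H g -> t b _ cb e.
  exists (fun _ => (tt : Pt)); split.
  + by move=> ?; apply: cvg_cst.
  + by apply: boolp.funext => x /=; case: (t x).
  + apply: boolp.funext => y /=; symmetry; apply: H => // x.
    by have := congr1 (fun h => h x) e => /= <-.
Qed.

Lemma open_near (Y : topologicalType) (C : set Y) x : open C -> C x -> \forall y \near x, C y.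
Proof. by move=> oC Cx; apply: open_nbhs_nbhs; split. Qed.

Lemma JL_clopen (f : Mor) : JL f <->
  (forall C : set (mcod f), C !=set0 -> open C -> closed C ->
         exists x : mdom f, C (morfun f x)).
Proof.
split.
- move=> H C [y Cy] oC cC; apply: contrapT => nE.
  pose b := fun z : mcod f => (~~ `[< C z >] : Two).
  have cb : continuous b.
    apply: lc_cont => x; have [Cx|nCx] := pselect (C x).
      near=> z; rewrite /b !asboolT //; near: z; exact: open_near.
    have oC' : open (~` C) by exact: closed_openC.
    near=> z; rewrite /b !asboolF //; near: z; exact: open_near.
  Unshelve. all: try by end_near.
  have Hb : forall x, b (morfun f x) = true.
    by move=> x; rewrite /b asboolF // => Cfx; apply: nE; exists x.
  by have := H b cb Hb y; rewrite /b asboolT.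
- move=> H b cb hb y; apply: contrapT => /negP/negPf by0.
  have [|||x] := H (b @^-1` [set false]).
  + by exists y.
  + by apply: (proj1 (continuousP _) cb); exact: (@discrete_open (discrete_topology bool)).
  + rewrite (_ : [set false] = ~` [set true]); last first.
      by apply/seteqP; split => -[] //=.
    rewrite -preimage_setC closedC.
    by apply: (proj1 (continuousP _) cb); exact: (@discrete_open (discrete_topology bool)).
  + by rewrite /= hb.
Qed.

Lemma conn_const (Y : topologicalType) (b : Y -> Two) (A : set Y) x y :
  continuous b -> connected A -> A x -> A y -> b y = b x.
Proof.
move=> cb cA Ax Ay.
have oP : open (b @^-1` [set b x]).
  by apply: (proj1 (continuousP _) cb); exact: (@discrete_open (discrete_topology bool)).
have cP : closed (b @^-1` [set b x]).
  rewrite -[_ @^-1` _]setCK closedC preimage_setC.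
  by apply: (proj1 (continuousP _) cb); exact: (@discrete_open (discrete_topology bool)).
have E : A `&` b @^-1` [set b x] = A.
  by apply: cA; [exists x|exists (b @^-1` [set b x])|exists (b @^-1` [set b x])].
have : (A `&` b @^-1` [set b x]) y by rewrite E.
by case.
Qed.

Lemma comp_cont (X Y Z : topologicalType) (f : X -> Y) (g : Y -> Z) :
  continuous f -> continuous g -> continuous (g \o f).
Proof. by move=> cf cg x; apply: continuous_comp; [exact: cf|exact: cg]. Qed.

Lemma j_in : lorth (rorth (singleton_class iota_empty)) j_pt.
Proof.
move=> g Hg t b ct cb e.
have Li := Hg iota_empty erefl.
have [|d0 [_ _ e0]] := Li (fun x : Defs.Empty => match x with end) (fun _ => b false)
  ltac:(by case) (@Pt_cont _ _).
  by apply: boolp.funext => -[].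
exists (fun z : Two => if z then t tt else d0 tt); split.
- exact: Two_cont.
- by apply: boolp.funext => -[].
- apply: boolp.funext => -[] /=.
  + by have := congr1 (fun h => h tt) e.
  + by have := congr1 (fun h => h tt) e0.
Qed.

Lemma back (f : Mor) : JL f -> lorth (lorth (rorth (singleton_class iota_empty))) f.
Proof.
move=> H g Hg t b ct cb e.
have [[y0 _]|ny] := pselect (exists y : mcod f, True); last first.
  exists (fun y => False_rect _ (ny (ex_intro _ y I))); split.
  - by move=> y; exfalso; apply: ny; exists y.
  - by apply: boolp.funext => x; exfalso; apply: ny; exists (morfun f x).
  - by apply: boolp.funext => y; exfalso; apply: ny; exists y.
have [x0 _] : exists x : mdom f, True.
  apply: contrapT => nx.
  have Hf : forall x, (fun _ => (false : Two)) (morfun f x) = true.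
    by move=> x; exfalso; apply: nx; exists x.
  have cc : continuous (fun _ : mcod f => (false : Two)) by move=> ?; exact: cvg_cst.
  by have := H _ cc Hf y0.
pose c0 := t x0.
pose E := (mdom g * mcod g * Two)%type.
pose h := fun p : E => if p.2 then p.1.2 else morfun g p.1.1.
have sndc : continuous (fun q : E => q.2) by move=> q; exact: cvg_snd.
have hc : continuous h.
  move=> p; have := @cont_lc _ _ sndc p; case hp: p.2 => nearp.
  + apply: cvg_trans; first apply: (@near_eq_cvg _ _ _ _ (fun q : E => q.1.2) h).
      by near=> q; rewrite /h; near: q; apply: filterS nearp => q /= ->.
    rewrite /h hp; apply: (cvg_comp fst snd); [exact: cvg_fst|exact: cvg_snd].
  + apply: cvg_trans; first apply: (@near_eq_cvg _ _ _ _ (fun q : E => morfun g q.1.1) h).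
      by near=> q; rewrite /h; near: q; apply: filterS nearp => q /= ->.
    rewrite /h hp; apply: (cvg_comp (fst \o fst) (morfun g)).
      apply: (cvg_comp fst fst); exact: cvg_fst.
    exact: mcont.
pose hM := MkMor hc.
have Hh : rorth (singleton_class iota_empty) hM.
  move=> f0 -> t0 b0 _ _ _.
  exists (fun u => ((c0, b0 u), true) : E); split.
  - exact: (@Pt_cont _ _).
  - by apply: boolp.funext => -[].
  - by apply: boolp.funext => u.
pose t' := fun c : mdom g => ((c, morfun g c), false) : E.
have ct' : continuous t'.
  move=> c.
  have h1 : (fun c => (c, morfun g c)) @ nbhs c --> (c, morfun g c).
    have := @cvg_pair _ _ _ (nbhs c) (nbhs c) (nbhs (morfun g c)) _ _ _ id (morfun g) (@cvg_id _ _) (@mcont g c).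
    exact.
  have := @cvg_pair _ _ _ (nbhs c) (nbhs (c, morfun g c)) (nbhs (false : Two)) _ _ _ _ (fun _ => (false : Two)) h1 (cvg_cst _).
  exact.
have [|d' [cd' e1 e2]] := Hg hM Hh t' id ct' (fun z => cvg_id).
  by apply: boolp.funext => c.
pose k : mcod f -> Two := fun y => (negb : Two -> Two) ((d' (b y)).2).
have ck : continuous k.
  have c1 : continuous (d' \o b) := @comp_cont _ _ _ _ _ cb cd'.
  have c2 : continuous ((fun q : E => (q.2 : Two)) \o (d' \o b)) := @comp_cont _ _ _ _ _ c1 sndc.
  exact: (@comp_cont _ _ _ _ _ c2 (@Two_cont Two negb)).
have kf : forall x, (k : mcod f -> Two) (morfun f x) = true.
  move=> x; rewrite /k /=.
  have -> : b (morfun f x) = morfun g (t x) by have := congr1 (fun u => u x) e.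
  by have := congr1 (fun u => u (t x)) e1 => /= ->.
have kall := H _ ck kf.
exists (fun y => (d' (b y)).1.1); split.
- have c1 : continuous (d' \o b) := @comp_cont _ _ _ _ _ cb cd'.
  have f1 : continuous (fun q : E => q.1) by move=> q; exact: cvg_fst.
  have f2 : continuous (fun q : (mdom g * mcod g)%type => q.1) by move=> q; exact: cvg_fst.
  exact: (@comp_cont _ _ _ _ _ (@comp_cont _ _ _ _ _ c1 f1) f2).
- apply: boolp.funext => x /=.
  have -> : b (morfun f x) = morfun g (t x) by have := congr1 (fun u => u x) e.
  by have := congr1 (fun u => u (t x)) e1 => /= ->.
- apply: boolp.funext => y /=.
  have := congr1 (fun u => u (b y)) e2; rewrite /= /h.
  by have := kall y; rewrite /k /=; case: (d' (b y)).2.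
Unshelve. all: by end_near.
Qed.

Lemma part1 (f : Mor) : lorth (lorth (rorth (singleton_class iota_empty))) f <->
      lorth (singleton_class j_pt) f.
Proof.
split; first by move=> H g ->; apply: H; exact: j_in.
by move/jlift_iff; exact: back.
Qed.


Lemma part3 (f : Mor) : finite_set (pi0 (X:=mcod f) @` setT) ->
  (JL f <-> forall y : mcod f, exists x : mdom f, pi0 (morfun f x) = connected_component setT y).
Proof.
rewrite /pi0 => fin; split.
- move/JL_clopen => H y.
  have cl : forall z : mcod f, closed (connected_component setT z).
    by move=> z; apply: component_closed; exact: closedT.
  have E : connected_component setT y = ~` \bigcup_(K in [set K | (connected_component (@setT (mcod f)) @` setT) K /\ K <> connected_component setT y]) K.
    apply/seteqP; split => z.
    + move=> yz [K [[w _ <-] Kne] wz]; apply: Kne.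
      by rewrite (same_connected_component wz) (same_connected_component yz).
    + move=> nz; apply: contrapT => nyz; apply: nz; exists (connected_component setT z).
        split; first by exists z.
        by move=> ezy; apply: nyz; rewrite -ezy; exact: connected_component_refl.
      exact: connected_component_refl.
  have [|||x yfx] := H (connected_component setT y).
  + by exists y; exact: connected_component_refl.
  + rewrite E; apply: closed_openC; apply: closed_bigcup.
      by apply: sub_finite_set fin => K [].
    by move=> K [[w _ <-] _].
  + exact: cl.
  + by exists x; rewrite (same_connected_component yfx).
- move=> H b cb hb y; have [x e] := H y.
  rewrite -(hb x); apply: (@conn_const _ b (connected_component setT (morfun f x))) => //.
  + exact: component_connected.
  + exact: connected_component_refl.
  + by rewrite e; exact: connected_component_refl.
Qed.

Theorem mainTheorem2 :
  (forall f : Mor,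
      lorth (lorth (rorth (singleton_class iota_empty))) f <->
      lorth (singleton_class j_pt) f) /\
  (forall f : Mor,
      lorth (singleton_class j_pt) f <->
      (forall C : set (mcod f), C !=set0 -> open C -> closed C ->
         exists x : mdom f, C (morfun f x))) /\
  (forall f : Mor,
      finite_set (pi0 (X:=mcod f) @` setT) ->
      (lorth (singleton_class j_pt) f <->
       (forall y : mcod f, exists x : mdom f, pi0 (morfun f x) = pi0 y))).
Proof.
split; first exact: part1.
split.
- move=> f; rewrite jlift_iff; exact: JL_clopen.
- move=> f fin; rewrite jlift_iff; exact: part3.
Qed.
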